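(* For every propositional Hilbert-type calculus $\mathbf{C}$, its many-valued closure $\mathrm{MC}(\mathbf{C})$ has an effective sequential approximation.
   Context: A propositional language $\mathcal{L}$ has variables $X_1,X_2,\ldots$ and finitely many connectives with arities. A propositional Hilbert-type calculus $\mathbf{C}$ is given by a finite set of axioms (formulas) and a finite set of rules (premises $A_1,\ldots,A_n$, conclusion $C$). A finite-valued logic $\mathbf{M}$ is given by a finite set $V(\mathbf{M})$ of truth values, designated values $V^+(\mathbf{M})\subseteq V(\mathbf{M})$, and a truth function for each connective; valuations map variables to truth values and extend to formulas; a valuation satisfies $F$ if $F$ gets a designated value; a tautology is a formula satisfied by every valuation; $\mathrm{Taut}(\mathbf{M})$ is the set of tautologies; $\mathbf{M}_1\unlhd\mathbf{M}_2$ means $\mathrm{Taut}(\mathbf{M}_1)\subseteq\mathrm{Taut}(\mathbf{M}_2)$. $\mathbf{M}$ is a cover for $\mathbf{C}$ if all axioms of $\mathbf{C}$ are tautologies of $\mathbf{M}$ and for every rule every valuation satisfying all premises satisfies the conclusion. The many-valued closure $\mathrm{MC}(\mathbf{C})$ is the set of formulas that are tautologies of every finite-valued cover of $\mathbf{C}$. For a set $\mathbf{L}$ of formulas, a sequential approximation of $\mathbf{L}$ is a sequence $\langle\mathbf{M}_1,\mathbf{M}_2,\ldots\rangle$ of finite-valued logics over $\mathcal{L}$ with $\mathbf{M}_i\unlhd\mathbf{M}_j$ whenever $i\ge j$ and $\mathbf{L}=\bigcap_j\mathrm{Taut}(\mathbf{M}_j)$; it is effective if the sequence is effectively enumerated.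 *)

(* Defs.v *)
From Stdlib Require List.
From mathcomp Require Import all_boot.


Set Implicit Arguments.
Unset Strict Implicit.
Unset Printing Implicit Defensive.

(* A language is given by the list of arities of its finitely many
   connectives: connective number [c] has arity [nth 0 L c], for
   [c < size L]. *)
Definition lang := seq nat.

Inductive formula : Type :=
  | Var of nat
  | App of nat & seq formula.

Fixpoint wf_formula (L : lang) (F : formula) : bool :=
  match F with
  | Var _ => true
  | App c args =>
      [&& c < size L, size args == nth 0 L c
        & all id (map (wf_formula L) args)]
  end.

(* A finite-valued logic with truth values {0, ..., nv - 1}, designated
   values [des], and for each connective c a truth table [nth [::] tabs c],
   listing the value of c on the argument tuple (a_1,...,a_n) at position
   a_1 * nv^(n-1) + ... + a_n (base-nv digits, most significant first). *)
Record logic : Type := Logic {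
  nv : nat;
  des : seq nat;
  tabs : seq (seq nat)
}.

Definition wf_logic (L : lang) (M : logic) : bool :=
  [&& 0 < nv M,
      all (fun d => d < nv M) (des M),
      size (tabs M) == size L
    & all (fun c =>
             (size (nth [::] (tabs M) c) == nv M ^ nth 0 L c)
             && all (fun x => x < nv M) (nth [::] (tabs M) c))
          (iota 0 (size L))].

Definition tuple_index (k : nat) (xs : seq nat) : nat :=
  foldl (fun acc x => acc * k + x) 0 xs.

Fixpoint feval (M : logic) (v : nat -> nat) (F : formula) : nat :=
  match F with
  | Var n => v n
  | App c args =>
      nth 0 (nth [::] (tabs M) c) (tuple_index (nv M) (map (feval M v) args))
  end.

Definition valuation (M : logic) (v : nat -> nat) : Prop :=
  forall n, v n < nv M.

Definition satisfies (M : logic) (v : nat -> nat) (F : formula) : Prop :=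
  feval M v F \in des M.

Definition taut (L : lang) (M : logic) (F : formula) : Prop :=
  wf_formula L F /\ forall v, valuation M v -> satisfies M v F.

Definition taut_le (L : lang) (M1 M2 : logic) : Prop :=
  forall F, taut L M1 F -> taut L M2 F.

Record calculus : Type := Calculus {
  axioms : seq formula;
  rules : seq (seq formula * formula)
}.

Definition calculus_over (L : lang) (C : calculus) : Prop :=
  (forall A, List.In A (axioms C) -> wf_formula L A) /\
  (forall r, List.In r (rules C) ->
     (forall A, List.In A r.1 -> wf_formula L A) /\ wf_formula L r.2).

Definition cover (L : lang) (M : logic) (C : calculus) : Prop :=
  (forall A, List.In A (axioms C) -> taut L M A) /\
  (forall r, List.In r (rules C) ->
     forall v, valuation M v ->
       (forall A, List.In A r.1 -> satisfies M v A) -> satisfies M v r.2).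

Definition MC (L : lang) (C : calculus) (F : formula) : Prop :=
  wf_formula L F /\
  forall M, wf_logic L M -> cover L M C -> taut L M F.

(* The paper indexes M_1, M_2, ...; here indices start at 0. *)
Definition seq_approx (L : lang) (S : formula -> Prop) (M : nat -> logic) : Prop :=
  (forall j, wf_logic L (M j)) /\
  (forall i j, j <= i -> taut_le L (M i) (M j)) /\
  (forall F, S F <-> forall j, taut L (M j) F).

Inductive recf : Type :=
  | RZero
  | RSucc
  | RProj of nat
  | RComp of recf & seq recf
  | RPrec of recf & recf
  | RMin of recf.

Inductive reval : recf -> seq nat -> nat -> Prop :=
  | reval_zero xs : reval RZero xs 0
  | reval_succ xs : reval RSucc xs (head 0 xs).+1
  | reval_proj i xs : reval (RProj i) xs (nth 0 xs i)
  | reval_comp f gs xs ys y :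
      List.Forall2 (fun g z => reval g xs z) gs ys ->
      reval f ys y -> reval (RComp f gs) xs y
  | reval_prec0 f g xs y :
      reval f xs y -> reval (RPrec f g) (0 :: xs) y
  | reval_precS f g n xs r y :
      reval (RPrec f g) (n :: xs) r ->
      reval g (n :: r :: xs) y ->
      reval (RPrec f g) (n.+1 :: xs) y
  | reval_min f xs n :
      reval f (n :: xs) 0 ->
      (forall m, m < n -> exists r, reval f (m :: xs) r.+1) ->
      reval (RMin f) xs n.

(* Cantor pairing and the induced injective coding of lists of naturals. *)
Definition cpair (a b : nat) : nat := ((a + b) * (a + b).+1) %/ 2 + b.

Fixpoint code_seq (s : seq nat) : nat :=
  match s with
  | [::] => 0
  | x :: s' => (cpair x (code_seq s')).+1
  end.

Definition code_logic (M : logic) : nat :=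
  code_seq [:: nv M; code_seq (des M); code_seq (map code_seq (tabs M))].

Definition effective (M : nat -> logic) : Prop :=
  exists p : recf, forall n, reval p [:: n] (code_logic (M n)).

(* Main.v *)
Require Import Defs.
From mathcomp Require Import all_boot.
From mathcomp Require Import zify.

Set Implicit Arguments.
Unset Strict Implicit.
Unset Printing Implicit Defensive.


Definition pr k (f : seq nat -> nat) :=
  exists p, forall xs, size xs = k -> reval p xs (f xs).

Lemma pr_ext k f g : (forall xs, size xs = k -> f xs = g xs) -> pr k f -> pr k g.
Proof. move=> H [p Hp]; exists p => xs Hs; rewrite -H //; exact: Hp. Qed.

Lemma pr_nth k i : pr k (fun xs => nth 0 xs i).
Proof. exists (RProj i) => xs _; exact: reval_proj. Qed.

Lemma pr_zero k : pr k (fun _ => 0).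
Proof. exists RZero => xs _; exact: reval_zero. Qed.

Lemma pr_list k (gs : seq (seq nat -> nat)) :
  (forall g, List.In g gs -> pr k g) ->
  exists ps, forall xs, size xs = k ->
    List.Forall2 (fun p z => reval p xs z) ps (map (fun g => g xs) gs).
Proof.
elim: gs => [|g gs IH] H; first by exists [::] => xs _; constructor.
have [p Hp] := H g (or_introl erefl).
have [ps Hps] := IH (fun g' Hg => H g' (or_intror Hg)).
exists (p :: ps) => xs Hs; constructor; [exact: Hp | exact: Hps].
Qed.

Lemma pr_compl k m h gs : pr m h -> size gs = m ->
  (forall g, List.In g gs -> pr k g) -> pr k (fun xs => h (map (fun g => g xs) gs)).
Proof.
move=> [ph Hh] Hsz Hgs; have [ps Hps] := pr_list Hgs.
exists (RComp ph ps) => xs Hs; apply: reval_comp; first exact: Hps.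
by apply: Hh; rewrite size_map.
Qed.

Lemma pr_succ k f : pr k f -> pr k (fun xs => (f xs).+1).
Proof.
move=> [p Hp]; exists (RComp RSucc [:: p]) => xs Hs.
apply: (@reval_comp _ _ _ [:: f xs]); first by constructor; [exact: Hp|constructor].
exact: (reval_succ [:: f xs]).
Qed.

Lemma pr_const k c : pr k (fun _ => c).
Proof. elim: c => [|c IH]; [exact: pr_zero | exact: pr_succ]. Qed.

Lemma pr_comp1 k h f : pr 1 (fun ys => h (nth 0 ys 0)) -> pr k f -> pr k (fun xs => h (f xs)).
Proof.
move=> Hh Hf; have := @pr_compl k 1 _ [:: f] Hh erefl.
move=> H; apply: pr_ext (H _) => //; move=> g /= [<-|[]] //.
Qed.

Lemma pr_comp2 k h f g : pr 2 (fun ys => h (nth 0 ys 0) (nth 0 ys 1)) -> pr k f -> pr k g ->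
  pr k (fun xs => h (f xs) (g xs)).
Proof.
move=> Hh Hf Hg; have := @pr_compl k 2 _ [:: f; g] Hh erefl.
move=> H; apply: pr_ext (H _) => //; move=> g' /= [<-|[<-|[]]] //.
Qed.

Lemma pr_comp3 k h f g e : pr 3 (fun ys => h (nth 0 ys 0) (nth 0 ys 1) (nth 0 ys 2)) ->
  pr k f -> pr k g -> pr k e ->
  pr k (fun xs => h (f xs) (g xs) (e xs)).
Proof.
move=> Hh Hf Hg He; have := @pr_compl k 3 _ [:: f; g; e] Hh erefl.
move=> H; apply: pr_ext (H _) => //; move=> g' /= [<-|[<-|[<-|[]]]] //.
Qed.

Lemma pr_comp4 k h f g e d : pr 4 (fun ys => h (nth 0 ys 0) (nth 0 ys 1) (nth 0 ys 2) (nth 0 ys 3)) ->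
  pr k f -> pr k g -> pr k e -> pr k d ->
  pr k (fun xs => h (f xs) (g xs) (e xs) (d xs)).
Proof.
move=> Hh Hf Hg He Hd; have := @pr_compl k 4 _ [:: f; g; e; d] Hh erefl.
move=> H; apply: pr_ext (H _) => //; move=> g' /= [<-|[<-|[<-|[<-|[]]]]] //.
Qed.

Fixpoint loopf (b s : seq nat -> nat) n xs :=
  if n is n'.+1 then s (n' :: loopf b s n' xs :: xs) else b xs.

Lemma Forall2_proj xs l :
  List.Forall2 (fun p z => reval p xs z) (map RProj l) (map (nth 0 xs) l).
Proof. elim: l => [|i l IH] /=; constructor => //; exact: reval_proj. Qed.

Lemma pr_loop k B b s : pr k B -> pr k b -> pr k.+2 s ->
  pr k (fun xs => loopf b s (B xs) xs).
Proof.
move=> [pB HB] [pb Hb] [ps Hs].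
exists (RComp (RPrec pb ps) (pB :: map RProj (iota 0 k))) => xs Hx.
apply: (@reval_comp _ _ _ (B xs :: xs)).
  constructor; first exact: HB.
  have := Forall2_proj xs (iota 0 k).
  by rewrite -/(mkseq (nth 0 xs) k) -Hx mkseq_nth.
elim: (B xs) => [|n IH] /=; first by apply: reval_prec0; exact: Hb.
apply: reval_precS; first exact: IH.
by apply: Hs; rewrite /= Hx.
Qed.

Lemma pr_nthb k g i : pr k (fun ys => nth 0 (g ys) i.+1) -> pr k (fun ys => nth 0 (behead (g ys)) i).
Proof. by apply: pr_ext => ys _; rewrite nth_behead. Qed.


Lemma pr_add k f g : pr k f -> pr k g -> pr k (fun xs => f xs + g xs).
Proof.
apply: pr_comp2.
set b := fun xs : seq nat => nth 0 xs 0.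
set s := fun ys : seq nat => (nth 0 ys 1).+1.
have E : forall n xs, loopf b s n xs = nth 0 xs 0 + n.
  by move=> n xs; elim: n => [|n IH] /=; rewrite ?addn0 // IH /s /= addnS.
apply: pr_ext (pr_loop (pr_nth 2 1) (pr_nth 2 0) (pr_succ (pr_nth _ 1))).
by move=> xs _; rewrite E.
Qed.

Lemma pr_mul k f g : pr k f -> pr k g -> pr k (fun xs => f xs * g xs).
Proof.
apply: pr_comp2.
set b := fun xs : seq nat => 0.
set s := fun ys : seq nat => nth 0 ys 1 + nth 0 ys 2.
have E : forall n xs, loopf b s n xs = nth 0 xs 0 * n.
  by move=> n xs; elim: n => [|n IH] /=; rewrite ?muln0 // IH /s /= mulnS addnC.
apply: pr_ext (pr_loop (pr_nth 2 1) (pr_zero _) (pr_add (pr_nth _ 1) (pr_nth _ 2))).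
by move=> xs _; rewrite E.
Qed.

Lemma pr_pred k f : pr k f -> pr k (fun xs => (f xs).-1).
Proof.
apply: pr_comp1.
set b := fun xs : seq nat => 0.
set s := fun ys : seq nat => nth 0 ys 0.
have E : forall n xs, loopf b s n xs = n.-1 by move=> [|n] xs.
apply: pr_ext (pr_loop (pr_nth 1 0) (pr_zero _) (pr_nth _ 0)).
by move=> xs _; rewrite E.
Qed.

Lemma pr_sub k f g : pr k f -> pr k g -> pr k (fun xs => f xs - g xs).
Proof.
apply: pr_comp2.
set b := fun xs : seq nat => nth 0 xs 0.
set s := fun ys : seq nat => (nth 0 ys 1).-1.
have E : forall n xs, loopf b s n xs = nth 0 xs 0 - n.
  by move=> n xs; elim: n => [|n IH] /=; rewrite ?subn0 // IH /s /= subnS.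
apply: pr_ext (pr_loop (pr_nth 2 1) (pr_nth 2 0) (pr_pred (pr_nth _ 1))).
by move=> xs _; rewrite E.
Qed.

Lemma pr_exp k f g : pr k f -> pr k g -> pr k (fun xs => f xs ^ g xs).
Proof.
apply: pr_comp2.
set b := fun xs : seq nat => 1.
set s := fun ys : seq nat => nth 0 ys 1 * nth 0 ys 2.
have E : forall n xs, loopf b s n xs = nth 0 xs 0 ^ n.
  by move=> n xs; elim: n => [|n IH] /=; rewrite ?expn0 // IH /s /= expnS mulnC.
apply: pr_ext (pr_loop (pr_nth 2 1) (pr_const _ 1) (pr_mul (pr_nth _ 1) (pr_nth _ 2))).
by move=> xs _; rewrite E.
Qed.

Lemma pr_eq0 k f : pr k f -> pr k (fun xs => nat_of_bool (f xs == 0)).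
Proof.
apply: (@pr_comp1 k (fun y => nat_of_bool (y == 0))).
set b := fun xs : seq nat => 1.
set s := fun ys : seq nat => 0.
have E : forall n xs, loopf b s n xs = nat_of_bool (n == 0) by move=> [|n] xs.
apply: pr_ext (pr_loop (pr_nth 1 0) (pr_const _ 1) (pr_zero _)).
by move=> xs _; rewrite E.
Qed.

Lemma pr_leq k f g : pr k f -> pr k g -> pr k (fun xs => nat_of_bool (f xs <= g xs)).
Proof.
move=> Hf Hg; apply: pr_ext (pr_eq0 (pr_sub Hf Hg)) => xs _.
by rewrite subn_eq0.
Qed.

Lemma pr_band k f g : pr k (fun xs => nat_of_bool (f xs)) -> pr k (fun xs => nat_of_bool (g xs)) ->
  pr k (fun xs => nat_of_bool (f xs && g xs)).
Proof.
move=> Hf Hg; apply: pr_ext (pr_mul Hf Hg) => xs _.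
by case: (f xs); case: (g xs).
Qed.

Lemma pr_bneg k f : pr k (fun xs => nat_of_bool (f xs)) ->
  pr k (fun xs => nat_of_bool (~~ f xs)).
Proof.
move=> Hf; apply: pr_ext (pr_sub (pr_const k 1) Hf) => xs _.
by case: (f xs).
Qed.

Lemma pr_bor k f g : pr k (fun xs => nat_of_bool (f xs)) -> pr k (fun xs => nat_of_bool (g xs)) ->
  pr k (fun xs => nat_of_bool (f xs || g xs)).
Proof.
move=> Hf Hg; apply: pr_ext (pr_bneg (pr_band (pr_bneg Hf) (pr_bneg Hg))) => xs _.
by case: (f xs); case: (g xs).
Qed.

Lemma pr_bimp k f g : pr k (fun xs => nat_of_bool (f xs)) -> pr k (fun xs => nat_of_bool (g xs)) ->
  pr k (fun xs => nat_of_bool (f xs ==> g xs)).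
Proof.
move=> Hf Hg; apply: pr_ext (pr_bor (pr_bneg Hf) Hg) => xs _.
by case: (f xs); case: (g xs).
Qed.

Lemma pr_btrue k : pr k (fun xs => nat_of_bool true).
Proof. exact: pr_const. Qed.

Lemma pr_eqn k f g : pr k f -> pr k g -> pr k (fun xs => nat_of_bool (f xs == g xs)).
Proof.
move=> Hf Hg; apply: pr_ext (pr_band (pr_leq Hf Hg) (pr_leq Hg Hf)) => xs _.
by rewrite eqn_leq.
Qed.

Lemma pr_if k b f g : pr k (fun xs => nat_of_bool (b xs)) -> pr k f -> pr k g ->
  pr k (fun xs => if b xs then f xs else g xs).
Proof.
move=> Hb Hf Hg.
apply: pr_ext (pr_add (pr_mul Hb Hf) (pr_mul (pr_bneg Hb) Hg)) => xs _.
by case: (b xs) => /=; rewrite ?mul1n ?mul0n ?addn0.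
Qed.

Lemma pr_odd k f : pr k f -> pr k (fun xs => nat_of_bool (odd (f xs))).
Proof.
apply: (@pr_comp1 k (fun y => nat_of_bool (odd y))).
set b := fun xs : seq nat => 0.
set s := fun ys : seq nat => 1 - nth 0 ys 1.
have E : forall n xs, loopf b s n xs = nat_of_bool (odd n).
  by move=> n xs; elim: n => [|n IH] //=; rewrite IH /s /=; case: (odd n).
apply: pr_ext (pr_loop (pr_nth 1 0) (pr_zero _) (pr_sub (pr_const _ 1) (pr_nth _ 1))).
by move=> xs _; rewrite E.
Qed.

Fixpoint sumb n (F : nat -> nat) := if n is n'.+1 then sumb n' F + F n' else 0.

Lemma pr_shift k h : pr k.+1 h -> pr k.+2 (fun ys => h (nth 0 ys 0 :: behead (behead ys))).
Proof.
move=> Hh.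
have := @pr_compl k.+2 k.+1 h (map (fun i ys => nth 0 ys i) (0 :: iota 2 k)) Hh.
rewrite size_map /= size_iota => /(_ erefl) H.
apply: pr_ext (H _); last first.
  move=> g /= [<-|]; first exact: pr_nth.
  by move/List.in_map_iff => [i [<- _]]; exact: pr_nth.
move=> ys Hs /=; congr (h (_ :: _)).
rewrite -map_comp /comp map_nth_iota; last by rewrite Hs; lia.
case: ys Hs => [|y1 [|y2 ys]] //= [] Hs; by rewrite drop0 take_oversize // Hs.
Qed.

Lemma pr_sum k B F : pr k B -> pr k.+1 (fun ys => F (nth 0 ys 0) (behead ys)) ->
  pr k (fun xs => sumb (B xs) (fun j => F j xs)).
Proof.
move=> HB HF.
set s := fun ys : seq nat => nth 0 ys 1 + F (nth 0 ys 0) (behead (behead ys)).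
have E : forall n xs, loopf (fun _ => 0) s n xs = sumb n (fun j => F j xs).
  by move=> n xs; elim: n => [|n IH] //=; rewrite IH.
apply: pr_ext (pr_loop HB (pr_zero _) (pr_add (pr_nth _ 1) (pr_shift HF))).
by move=> xs _; rewrite E.
Qed.


Lemma sumb_ext n F G : (forall j, j < n -> F j = G j) -> sumb n F = sumb n G.
Proof.
elim: n => [|n IH] H //=; rewrite IH ?H // => j Hj; apply: H; exact: ltnW.
Qed.

Lemma sumb_lt n c : sumb n (fun j => nat_of_bool (j < c)) = minn n c.
Proof.
elim: n => [|n IH] /=; first by rewrite min0n.
rewrite IH; case: ltnP => H; lia.
Qed.

Lemma div_sum x m : x %/ m = (0 < m) * sumb x (fun j => nat_of_bool (j.+1 * m <= x)).
Proof.
case: m => [|m]; first by rewrite divn0.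
rewrite mul1n (@sumb_ext _ _ (fun j => nat_of_bool (j < x %/ m.+1))).
  by rewrite sumb_lt; apply/esym/minn_idPr; exact: leq_div.
by move=> j _; rewrite -leq_divRL.
Qed.

Ltac pra := repeat match goal with |- pr _ _ => first [
   apply pr_nth | apply pr_nthb | apply pr_const
 | apply pr_add | apply pr_mul | apply pr_sub | apply pr_exp | apply pr_succ | apply pr_pred
 | apply pr_leq | apply pr_eqn | apply pr_band | apply pr_bor | apply pr_bneg | apply pr_bimp
 | apply pr_odd | apply pr_if | apply pr_sum ] end.

Lemma pr_div k f g : pr k f -> pr k g -> pr k (fun xs => f xs %/ g xs).
Proof.
move=> Hf Hg; apply: pr_comp2 => //.
apply: pr_ext => [xs _|]; first by rewrite div_sum.
pra.
Qed.

Lemma pr_mod k f g : pr k f -> pr k g -> pr k (fun xs => f xs %% g xs).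
Proof.
move=> Hf Hg; apply: pr_comp2 => //.
apply: (@pr_ext _ (fun ys => nth 0 ys 0 - nth 0 ys 0 %/ nth 0 ys 1 * nth 0 ys 1)).
  by move=> xs _; rewrite {1}(divn_eq (nth 0 xs 0) (nth 0 xs 1)) addKn.
by apply: pr_sub; [apply: pr_nth | apply: pr_mul; [apply: pr_div|]; apply: pr_nth].
Qed.

Ltac prb := repeat match goal with |- pr _ _ => first [ assumption |
   apply pr_nth | apply pr_nthb | apply pr_const
 | apply pr_add | apply pr_mul | apply pr_sub | apply pr_exp | apply pr_succ | apply pr_pred
 | apply pr_div | apply pr_mod
 | apply pr_leq | apply pr_eqn | apply pr_band | apply pr_bor | apply pr_bneg | apply pr_bimp
 | apply pr_odd | apply pr_if | apply pr_sum ] end.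



Lemma iotaSr m n : iota m n.+1 = rcons (iota m n) (m + n).
Proof. by rewrite -addn1 iotaD cats1. Qed.

Lemma pr_drop k m h : pr k h -> pr (m + k) (fun ys => h (drop m ys)).
Proof.
move=> Hh.
have := @pr_compl (m + k) k h (map (fun i ys => nth 0 ys i) (iota m k)) Hh.
rewrite size_map size_iota => /(_ erefl) H.
apply: pr_ext (H _); last first.
  by move=> g /List.in_map_iff [i [<- _]]; exact: pr_nth.
move=> ys Hs /=; congr h.
rewrite -map_comp /comp map_nth_iota; last by rewrite Hs; lia.
by rewrite take_oversize // size_drop Hs; lia.
Qed.

Lemma pr_b1 k h : pr k h -> pr k.+1 (fun ys => h (behead ys)).
Proof. move=> H; apply: pr_ext (pr_drop 1 H) => ys _; by case: ys => [|? ?] /=; rewrite ?drop0. Qed.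

Lemma pr_b2 k h : pr k h -> pr k.+2 (fun ys => h (behead (behead ys))).
Proof. move=> H; apply: pr_ext (pr_drop 2 H) => ys _; by case: ys => [|? [|? ?]] /=; rewrite ?drop0. Qed.

Lemma pr_cons k h e : pr k.+1 h -> pr k e -> pr k (fun ys => h (e ys :: ys)).
Proof.
move=> Hh He.
have := @pr_compl k k.+1 h (e :: map (fun i ys => nth 0 ys i) (iota 0 k)) Hh.
rewrite /= size_map size_iota => /(_ erefl) H.
apply: pr_ext (H _); last first.
  move=> g /= [<-|]; first exact: He.
  by move=> /List.in_map_iff [i [<- _]]; exact: pr_nth.
move=> ys Hs /=; congr (h (_ :: _)).
rewrite -map_comp /comp map_nth_iota; last by rewrite Hs; lia.
by rewrite drop0 take_oversize // Hs.
Qed.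

Lemma pr_app k F e : pr k.+1 (fun ys => F (nth 0 ys 0) (behead ys)) -> pr k e ->
  pr k (fun xs => F (e xs) xs).
Proof. move=> HF He; exact: (pr_cons HF He). Qed.

Lemma pr_app2 k F e : pr k.+1 (fun ys => F (nth 0 ys 0) (behead ys)) -> pr k.+2 e ->
  pr k.+2 (fun ys => F (e ys) (behead (behead ys))).
Proof.
move=> HF He.
have := @pr_compl k.+2 k.+1 _ (e :: map (fun i ys => nth 0 ys i) (iota 2 k)) HF.
rewrite /= size_map size_iota => /(_ erefl) H.
apply: pr_ext (H _); last first.
  move=> g /= [<-|]; first exact: He.
  by move/List.in_map_iff => [i [<- _]]; exact: pr_nth.
move=> ys Hs /=; congr (F _ _).
rewrite -map_comp /comp map_nth_iota; last by rewrite Hs; lia.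
case: ys Hs => [|y1 [|y2 ys]] //= [] Hs; by rewrite drop0 take_oversize // Hs.
Qed.

Definition tidx a r (f : nat -> nat) := tuple_index a (map f (iota 0 r)).

Lemma pr_tidx k A R F : pr k A -> pr k R -> pr k.+1 (fun ys => F (nth 0 ys 0) (behead ys)) ->
  pr k (fun xs => tidx (A xs) (R xs) (fun j => F j xs)).
Proof.
move=> HA HR HF.
set s := fun ys : seq nat => nth 0 ys 1 * A (behead (behead ys)) + F (nth 0 ys 0) (behead (behead ys)).
have E : forall n xs, loopf (fun _ => 0) s n xs = tidx (A xs) n (fun j => F j xs).
  move=> n xs; elim: n => [|n IH] //=.
  by rewrite IH /tidx /tuple_index iotaSr map_rcons foldl_rcons.
apply: pr_ext (@pr_loop _ _ _ s HR (pr_zero _) _); first by move=> xs _; rewrite E.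
apply: pr_add; first by apply: pr_mul; [apply: pr_nth | apply: pr_b2].
exact: (pr_app2 HF (pr_nth _ 0)).
Qed.

Lemma pr_tuple_index k A (gs : seq (seq nat -> nat)) : pr k A ->
  (forall g, List.In g gs -> pr k g) ->
  pr k (fun xs => tuple_index (A xs) (map (fun g => g xs) gs)).
Proof.
move=> HA; rewrite /tuple_index.
suff H : forall Z, pr k Z -> (forall g, List.In g gs -> pr k g) ->
  pr k (fun xs => foldl (fun acc x => acc * A xs + x) (Z xs) (map (fun g => g xs) gs)).
  by apply: H; exact: pr_zero.
elim: gs => [|g gs IH] Z HZ Hgs //=.
apply: IH; last by move=> g' Hg'; apply: Hgs; right.
by apply: pr_add; [apply: pr_mul|apply: Hgs; left].
Qed.

Lemma pr_cpair k f g : pr k f -> pr k g -> pr k (fun xs => cpair (f xs) (g xs)).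
Proof. move=> Hf Hg; rewrite /cpair; prb. Qed.

Lemma pr_code_mkseq k N F : pr k N -> pr k.+1 (fun ys => F (nth 0 ys 0) (behead ys)) ->
  pr k (fun xs => code_seq (mkseq (fun i => F i xs) (N xs))).
Proof.
move=> HN HF.
set s := fun ys : seq nat =>
  (cpair (F (N (behead (behead ys)) - (nth 0 ys 0).+1) (behead (behead ys))) (nth 0 ys 1)).+1.
have E : forall n xs, n <= N xs -> loopf (fun _ => 0) s n xs =
    code_seq (map (fun i => F i xs) (iota (N xs - n) n)).
  move=> n xs; elim: n => [|n IH] Hn //=.
  rewrite IH; last exact: ltnW.
  have -> : N xs - n = (N xs - n.+1).+1 by lia.
  by [].
apply: pr_ext (@pr_loop _ _ _ s HN (pr_zero _) _).
  by move=> xs _; rewrite E // subnn.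
apply: pr_succ; apply: pr_cpair; last exact: pr_nth.
apply: (pr_app2 HF).
by apply: pr_sub; [apply: pr_b2 | apply: pr_succ; apply: pr_nth].
Qed.

Lemma pr_code_filter k N P : pr k N -> pr k.+1 (fun ys => nat_of_bool (P (nth 0 ys 0) (behead ys))) ->
  pr k (fun xs => code_seq (filter (fun i => P i xs) (iota 0 (N xs)))).
Proof.
move=> HN HP.
set s := fun ys : seq nat =>
  let i := N (behead (behead ys)) - (nth 0 ys 0).+1 in
  if P i (behead (behead ys)) then (cpair i (nth 0 ys 1)).+1 else nth 0 ys 1.
have E : forall n xs, n <= N xs -> loopf (fun _ => 0) s n xs =
    code_seq (filter (fun i => P i xs) (iota (N xs - n) n)).
  move=> n xs; elim: n => [|n IH] Hn //=.
  rewrite IH; last exact: ltnW.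
  have -> : N xs - n = (N xs - n.+1).+1 by lia.
  by rewrite /s /=; case: (P _ _).
apply: pr_ext (@pr_loop _ _ _ s HN (pr_zero _) _).
  by move=> xs _; rewrite E // subnn.
have HB : pr k.+2 (fun ys => N (behead (behead ys)) - (nth 0 ys 0).+1).
  by apply: pr_sub; [apply: pr_b2 | apply: pr_succ; apply: pr_nth].
apply: pr_if.
  exact: (pr_app2 (F := fun i l => nat_of_bool (P i l)) HP HB).
  by apply: pr_succ; apply: pr_cpair => //; apply: pr_nth.
exact: pr_nth.
Qed.

Lemma pr_nthL k (l : seq nat) e : pr k e -> pr k (fun xs => nth 0 l (e xs)).
Proof.
elim: l e => [|x l IH] e He /=; first by apply: pr_ext (pr_zero _) => xs _; rewrite nth_nil.
apply: pr_ext (pr_if (pr_eqn He (pr_const _ 0)) (pr_const _ x) (IH _ (pr_pred He))).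
by move=> xs _; case: (e xs).
Qed.

Lemma pr_all (T : Type) k (l : seq T) P : (forall x, pr k (fun xs => nat_of_bool (P x xs))) ->
  pr k (fun xs => nat_of_bool (all (fun x => P x xs) l)).
Proof.
move=> HP; elim: l => [|x l IH] /=; first exact: pr_const.
exact: pr_band.
Qed.

Definition allb n (P : nat -> bool) := sumb n (fun j => nat_of_bool (~~ P j)) == 0.

Lemma allbP n (P : nat -> bool) : reflect (forall j, j < n -> P j) (allb n P).
Proof.
rewrite /allb; elim: n => [|n IH] /=; first by constructor.
rewrite addn_eq0; case: IH => H /=.
  case HP: (P n) => /=; constructor.
    by move=> j; rewrite ltnS leq_eqVlt => /orP [/eqP -> //|]; exact: H.
  by move/(_ n (ltnSn n)); rewrite HP.
constructor => H'; apply: H => j Hj; apply: H'; exact: ltnW.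
Qed.

Lemma pr_allb k N P : pr k N -> pr k.+1 (fun ys => nat_of_bool (P (nth 0 ys 0) (behead ys))) ->
  pr k (fun xs => nat_of_bool (allb (N xs) (fun j => P j xs))).
Proof.
move=> HN HP; rewrite /allb; apply: pr_eqn; last exact: pr_const.
apply: pr_sum => //; exact: pr_bneg.
Qed.


Lemma sum_bound m N e : (forall p, p < N -> e p < m) -> sumb N (fun p => e p * m ^ p) < m ^ N.
Proof.
elim: N => [|N IH] H /=; first by rewrite expn0.
have H1 := IH (fun p Hp => H p (ltnW Hp)).
have H2 := H N (ltnSn N).
rewrite expnS; move: H1 H2; move: (m ^ N) => X; nia.
Qed.

Lemma digit_sum m N e j : (forall p, p < N -> e p < m) -> j < N ->
  sumb N (fun p => e p * m ^ p) %/ m ^ j %% m = e j.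
Proof.
elim: N => [|N IH] H //= Hj.
have Hm : 0 < m by have := H j Hj; lia.
have Hpos : 0 < m ^ j by rewrite expn_gt0 Hm.
have Hb := sum_bound (fun p Hp => H p (ltnW Hp)).
have -> : m ^ N = m ^ (N - j) * m ^ j by rewrite -expnD; congr (_ ^ _); lia.
rewrite addnC mulnA divnMDl //.
case: (ltngtP j N) => [Hlt| |Heq]; last first.
- rewrite Heq subnn expn0 muln1 (divn_small Hb) addn0 modn_small //; exact: H.
- by move=> /leq_trans /(_ Hj); rewrite ltnn.
have -> : m ^ (N - j) = m ^ (N - j).-1 * m by rewrite -expnSr; congr (_ ^ _); lia.
rewrite mulnA modnMDl IH //; move=> p Hp; apply: H; exact: ltnW.
Qed.

Lemma ti_rcons m xs x : tuple_index m (rcons xs x) = tuple_index m xs * m + x.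
Proof. by rewrite /tuple_index foldl_rcons. Qed.

Lemma ti_bound m xs : 0 < m -> all (fun x => x < m) xs -> tuple_index m xs < m ^ size xs.
Proof.
move=> Hm; elim/last_ind: xs => [|xs x IH] /=; first by rewrite expn0.
rewrite all_rcons size_rcons ti_rcons expnS => /andP [Hx /IH].
move: (tuple_index m xs) (m ^ size xs) => t X; nia.
Qed.

Lemma ti_digits m xs : 0 < m -> all (fun x => x < m) xs ->
  map (fun j => tuple_index m xs %/ m ^ (size xs - j.+1) %% m) (iota 0 (size xs)) = xs.
Proof.
move=> Hm; elim/last_ind: xs => [|xs x IH] //.
rewrite all_rcons size_rcons => /andP [Hx Hxs].
rewrite iotaSr map_rcons add0n subnn expn0 divn1 ti_rcons modnMDl modn_small //.
congr rcons; apply: (eq_trans _ (IH Hxs)); apply/eq_in_map => j; rewrite mem_iota => /andP [_ Hj].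
have -> : (size xs).+1 - j.+1 = (size xs - j.+1).+1 by lia.
by rewrite expnSr [m ^ _ * m]mulnC divnMA divnMDl // (divn_small Hx) addn0.
Qed.

Definition desig D z := odd (D %/ 2 ^ z).
Definition Entry (L : lang) a T c t := T %/ a ^ (t * size L + c) %% a.
Definition dec (L : lang) a D T : logic :=
  Logic a (filter (desig D) (iota 0 a))
    (mkseq (fun c => mkseq (Entry L a T c) (a ^ nth 0 L c)) (size L)).

Fixpoint formula_ind2 (P : formula -> Prop) (HV : forall n, P (Var n))
  (HA : forall c args, (forall x, List.In x args -> P x) -> P (App c args)) (F : formula) {struct F} : P F :=
  match F with
  | Var n => HV n
  | App c args => HA c args
      ((fix go (l : seq formula) : forall x, List.In x l -> P x :=
          match l with
          | [::] => fun x H => False_ind _ H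
          | y :: l' => fun x H => match H with
                                  | or_introl E => eq_ind y P (formula_ind2 HV HA y) x E
                                  | or_intror H' => go l' x H'
                                  end
          end) args)
  end.

Lemma all_In T (p : T -> bool) s : all p s <-> (forall x, List.In x s -> p x).
Proof.
elim: s => [|y s IH] //=; split.
  by move=> /andP [Hy /IH Hs] x [<-|/Hs].
by move=> H; rewrite H ?IH //; [move=> x Hx; apply: H; right | left].
Qed.

Lemma feval_lt L M v F : wf_logic L M -> valuation M v -> feval M v F < nv M.
Proof.
move=> /and4P [Hnv _ Hsz /allP Htab] Hv; case: F => [n|c args] /=; first exact: Hv.
case Hc: (c < size L).
  have /andP [_ /allP Hall] : (size (nth [::] (tabs M) c) == nv M ^ nth 0 L c) && all (fun x => x < nv M) (nth [::] (tabs M) c) by apply: Htab; rewrite mem_iota.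
  case Ht: (tuple_index (nv M) (map (feval M v) args) < size (nth [::] (tabs M) c)).
    by apply: Hall; apply: mem_nth.
  by rewrite nth_default // leqNgt Ht.
rewrite (@nth_default _ [::] (tabs M)) ?nth_nil //.
by rewrite (eqP Hsz) leqNgt Hc.
Qed.

Lemma dec_wf L a D T : 0 < a -> wf_logic L (dec L a D T).
Proof.
move=> Ha; apply/and4P; split => //=.
- by apply/allP => z; rewrite mem_filter mem_iota => /andP [_ /andP [_]].
- by rewrite size_mkseq.
apply/allP => c; rewrite mem_iota add0n => /andP [_ Hc].
rewrite nth_mkseq // size_mkseq eqxx /=.
by apply/allP => x /mapP [t _ ->]; rewrite /Entry ltn_mod.
Qed.

Lemma dec_sat L a D T v F : 0 < a -> valuation (dec L a D T) v ->
  satisfies (dec L a D T) v F <-> desig D (feval (dec L a D T) v F).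
Proof.
move=> Ha Hv; have Hlt := feval_lt F (dec_wf L D T Ha) Hv; simpl in Hlt.
rewrite /satisfies /= mem_filter mem_iota add0n Hlt /= andbT; by split.
Qed.

Lemma dec_app L a D T v c args : 0 < a -> valuation (dec L a D T) v ->
  wf_formula L (App c args) ->
  feval (dec L a D T) v (App c args) = Entry L a T c (tuple_index a (map (feval (dec L a D T) v) args)).
Proof.
move=> Ha Hv /= /and3P [Hc /eqP Hsz _].
rewrite nth_mkseq // nth_mkseq //.
rewrite -Hsz -(size_map (feval (dec L a D T) v)); apply: ti_bound => //.
rewrite all_map; apply/all_In => F _ /=; exact: (feval_lt F (dec_wf L D T Ha) Hv).
Qed.


Fixpoint fe (L : lang) a T u F := match F with
  | Var i => u %/ a ^ i %% a
  | App c args => Entry L a T c (tuple_index a (map (fe L a T u) args))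
  end.

Definition vu a u (i : nat) := u %/ a ^ i %% a.

Lemma map_In_ext (A B : Type) (f g : A -> B) l : (forall x, List.In x l -> f x = g x) -> map f l = map g l.
Proof.
elim: l => [|x l IH] H //=; rewrite H; last by left.
by rewrite IH // => y Hy; apply: H; right.
Qed.

Lemma wf_args L c args x : wf_formula L (App c args) -> List.In x args -> wf_formula L x.
Proof.
move=> /= /and3P [_ _ H] Hx; move: H; rewrite all_map => /all_In; exact.
Qed.

Lemma fe_feval L a D T u F : 0 < a -> wf_formula L F ->
  fe L a T u F = feval (dec L a D T) (vu a u) F.
Proof.
move=> Ha; elim/formula_ind2: F => [n|c args IH] // Hwf.
have Hv : valuation (dec L a D T) (vu a u) by move=> i; rewrite /vu ltn_mod.
rewrite (dec_app Ha Hv Hwf) /=; congr (Entry _ _ _ _ (tuple_index _ _)).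
apply: map_In_ext => x Hx; apply: IH => //; exact: wf_args Hwf Hx.
Qed.

Fixpoint mv F := match F with
  | Var i => i.+1
  | App _ args => foldr maxn 0 (map mv args)
  end.

Lemma mv_In x l : List.In x l -> mv x <= foldr maxn 0 (map mv l).
Proof.
elim: l => [|y l IH] //= [<-|/IH H]; first exact: leq_maxl.
exact: leq_trans H (leq_maxr _ _).
Qed.

Lemma feval_agree M v w F : (forall i, i < mv F -> v i = w i) -> feval M v F = feval M w F.
Proof.
elim/formula_ind2: F => [n|c args IH] /= H; first by apply: H.
congr (nth _ _ (tuple_index _ _)); apply: map_In_ext => x Hx; apply: IH => // i Hi.
apply: H; exact: leq_trans Hi (mv_In Hx).
Qed.

Definition cforms (C : calculus) := axioms C ++ flatten (map (fun r => r.2 :: r.1) (rules C)).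
Definition VC C := foldr maxn 0 (map mv (cforms C)).

Lemma In_flatten_rules (rs : seq (seq formula * formula)) r :
  List.In r rs -> List.In r.2 (flatten (map (fun r => r.2 :: r.1) rs)) /\
    (forall A, List.In A r.1 -> List.In A (flatten (map (fun r => r.2 :: r.1) rs))).
Proof.
elim: rs => [|r' rs IH] //= [->|/IH [H1 H2]].
  split; first by left.
  by move=> A HA; right; apply: List.in_or_app; left.
split; first by right; apply: List.in_or_app; right.
by move=> A HA; right; apply: List.in_or_app; right; apply: H2.
Qed.

Lemma VC_ax C A : List.In A (axioms C) -> mv A <= VC C.
Proof. move=> H; apply: mv_In; apply: List.in_or_app; by left. Qed.

Lemma VC_rule C r : List.In r (rules C) -> mv r.2 <= VC C /\ (forall A, List.In A r.1 -> mv A <= VC C).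
Proof.
move=> /In_flatten_rules [H1 H2]; split.
  by apply: mv_In; apply: List.in_or_app; right.
by move=> A HA; apply: mv_In; apply: List.in_or_app; right; apply: H2.
Qed.

Definition ok (L : lang) (C : calculus) a D T :=
  all (fun A => allb (a ^ VC C) (fun u => desig D (fe L a T u A))) (axioms C) &&
  all (fun r => allb (a ^ VC C) (fun u => all (fun A => desig D (fe L a T u A)) r.1 ==> desig D (fe L a T u r.2)))
    (rules C).

Lemma encode_val (M : logic) a v V : 0 < a -> (forall i, v i < a) ->
  exists2 u, u < a ^ V & forall i, i < V -> vu a u i = v i.
Proof.
move=> Ha Hv; exists (sumb V (fun i => v i * a ^ i)); first exact: sum_bound.
by move=> i Hi; rewrite /vu digit_sum.
Qed.

Lemma ok_cover L C a D T : calculus_over L C -> 0 < a ->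
  ok L C a D T <-> Defs.cover L (dec L a D T) C.
Proof.
move=> [HCa HCr] Ha; split.
- move=> /andP [/all_In Hax /all_In Hru]; split.
    move=> A HA; split; first exact: HCa.
    move=> v Hv; have [u Hu Huv] := encode_val (dec L a D T) (VC C) Ha Hv.
    have := allbP _ _ (Hax A HA) u Hu.
    rewrite (fe_feval D _ _ Ha (HCa A HA)) (feval_agree _ (w := v)); last first.
      move=> i Hi; apply: Huv; exact: leq_trans Hi (VC_ax HA).
    by move=> H; apply/dec_sat.
  move=> r Hr v Hv Hprem.
  have [u Hu Huv] := encode_val (dec L a D T) (VC C) Ha Hv.
  have [Hwp Hwc] := HCr r Hr; have [Hmc Hmp] := VC_rule Hr.
  have := allbP _ _ (Hru r Hr) u Hu => /implyP H.
  apply/dec_sat => //.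
  rewrite -(feval_agree _ (v := vu a u)); last first.
    move=> i Hi; apply: Huv; exact: leq_trans Hi Hmc.
  rewrite -fe_feval //; apply: H; apply/all_In => A HA.
  rewrite (fe_feval D _ _ Ha (Hwp A HA)) (feval_agree _ (w := v)); last first.
    move=> i Hi; apply: Huv; exact: leq_trans Hi (Hmp A HA).
  by apply/dec_sat => //; apply: Hprem.
- move=> [Hax Hru]; have Hv : forall u, valuation (dec L a D T) (vu a u).
    by move=> u i; rewrite /vu ltn_mod.
  apply/andP; split; apply/all_In.
    move=> A HA; apply/allbP => u _.
    rewrite (fe_feval D _ _ Ha (HCa A HA)); apply/dec_sat => //.
    by apply: (proj2 (Hax A HA)).
  move=> r Hr; apply/allbP => u _; apply/implyP => /all_In Hp.
  have [Hwp Hwc] := HCr r Hr.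
  rewrite (fe_feval D _ _ Ha Hwc); apply/dec_sat => //.
  apply: Hru => // A HA; apply/dec_sat => //.
  by rewrite -fe_feval //; [apply: Hp | apply: Hwp].
Qed.


Definition rmax (L : lang) := foldr maxn 0 L.

Lemma nth_rmax L c : nth 0 L c <= rmax L.
Proof.
elim: L c => [|x L IH] [|c] //=; first exact: leq_maxl.
exact: leq_trans (IH c) (leq_maxr _ _).
Qed.

Lemma pos_lemma L a c t : 0 < a -> c < size L -> t < a ^ nth 0 L c ->
  [/\ t * size L + c < size L * a ^ rmax L, (t * size L + c) %% size L = c
    & (t * size L + c) %/ size L = t].
Proof.
move=> Ha Hc Ht.
have Hle : a ^ nth 0 L c <= a ^ rmax L by apply: leq_pexp2l => //; exact: nth_rmax.
have Hn : 0 < size L by lia.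
split.
- have : t.+1 <= a ^ rmax L by exact: leq_trans Ht Hle.
  move: (a ^ rmax L) => X; nia.
- by rewrite modnMDl modn_small.
- by rewrite divnMDl // divn_small // addn0.
Qed.

Lemma Entry_dig L a (e : nat -> nat) c t : 0 < a -> c < size L -> t < a ^ nth 0 L c ->
  (forall p, p < size L * a ^ rmax L -> e p < a) ->
  Entry L a (sumb (size L * a ^ rmax L) (fun p => e p * a ^ p)) c t = e (t * size L + c).
Proof.
move=> Ha Hc Ht He; have [H1 _ _] := pos_lemma Ha Hc Ht.
by rewrite /Entry digit_sum.
Qed.

Definition encD (N : logic) := sumb (nv N) (fun z => nat_of_bool (z \in des N) * 2 ^ z).
Definition encT (L : lang) (N : logic) :=
  sumb (size L * nv N ^ rmax L)
    (fun p => nth 0 (nth [::] (tabs N) (p %% size L)) (p %/ size L) * nv N ^ p).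

Lemma desig_dig N (P : nat -> bool) z : z < N ->
  desig (sumb N (fun z => nat_of_bool (P z) * 2 ^ z)) z = P z.
Proof.
move=> Hz; have := @digit_sum 2 N (fun z => nat_of_bool (P z)) z.
rewrite modn2 /desig => H; have {H} := H (fun p _ => ltac:(by case: (P p))) Hz.
by case: (odd _); case: (P z).
Qed.

Lemma enc_feval L N v F : wf_logic L N -> valuation N v -> wf_formula L F ->
  feval (dec L (nv N) (encD N) (encT L N)) v F = feval N v F.
Proof.
move=> HN Hv; have Ha : 0 < nv N by case/and4P: HN.
have Hv' : valuation (dec L (nv N) (encD N) (encT L N)) v by [].
elim/formula_ind2: F => [n|c args IH] // Hwf.
rewrite (dec_app Ha Hv' Hwf).
have Hargs : map (feval (dec L (nv N) (encD N) (encT L N)) v) args = map (feval N v) args.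
  by apply: map_In_ext => x Hx; apply: IH => //; exact: wf_args Hwf Hx.
rewrite Hargs; move: (Hwf) => /= /and3P [Hc /eqP Hsz _].
have Hti : tuple_index (nv N) (map (feval N v) args) < nv N ^ nth 0 L c.
  rewrite -Hsz -(size_map (feval N v)); apply: ti_bound => //.
  by rewrite all_map; apply/all_In => x _ /=; exact: (feval_lt x HN Hv).
rewrite /encT Entry_dig //; first by have [_ -> ->] := pos_lemma Ha Hc Hti.
move=> p _; case/and4P: HN => _ _ /eqP Hs /allP Htab.
case Hpc: (p %% size L < size L); last by rewrite (@nth_default _ [::] (tabs N)) ?nth_nil // Hs leqNgt Hpc.
have /andP [_ /allP Hall] : (size (nth [::] (tabs N) (p %% size L)) == nv N ^ nth 0 L (p %% size L))
    && all (fun x => x < nv N) (nth [::] (tabs N) (p %% size L)) by apply: Htab; rewrite mem_iota.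
case Hq: (p %/ size L < size (nth [::] (tabs N) (p %% size L))).
  by apply: Hall; apply: mem_nth.
by rewrite nth_default // leqNgt Hq.
Qed.

Lemma enc_sat L N v F : wf_logic L N -> valuation N v -> wf_formula L F ->
  satisfies (dec L (nv N) (encD N) (encT L N)) v F <-> satisfies N v F.
Proof.
move=> HN Hv Hwf; have Ha : 0 < nv N by case/and4P: HN.
rewrite dec_sat // enc_feval // /encD desig_dig; first by split.
exact: (feval_lt F HN Hv).
Qed.

Lemma enc_taut L N F : wf_logic L N ->
  taut L (dec L (nv N) (encD N) (encT L N)) F <-> taut L N F.
Proof.
move=> HN; split => [[Hw H]|[Hw H]]; split => // v Hv.
  by apply/(enc_sat HN Hv Hw); apply: H.
by apply/(enc_sat HN Hv Hw); apply: H.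
Qed.

Lemma enc_cover L C N : calculus_over L C -> wf_logic L N ->
  Defs.cover L (dec L (nv N) (encD N) (encT L N)) C <-> Defs.cover L N C.
Proof.
move=> [HCa HCr] HN; split => [[Ha Hr]|[Ha Hr]]; split.
- by move=> A HA; apply/(enc_taut _ HN); apply: Ha.
- move=> r Hr' v Hv Hp; have [Hwp Hwc] := HCr r Hr'.
  apply/(enc_sat HN Hv Hwc); apply: Hr => // A HA; apply/(enc_sat HN Hv (Hwp A HA)); exact: Hp.
- by move=> A HA; apply/(enc_taut _ HN); apply: Ha.
- move=> r Hr' v Hv Hp; have [Hwp Hwc] := HCr r Hr'.
  apply/(enc_sat HN Hv Hwc); apply: Hr => // A HA; apply/(enc_sat HN Hv (Hwp A HA)); exact: Hp.
Qed.

Lemma triv_taut L F : wf_formula L F -> taut L (dec L 1 1 0) F.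
Proof.
move=> Hw; split => // v Hv; apply/dec_sat => //.
have := feval_lt F (dec_wf L 1 0 (ltn0Sn 0)) Hv; rewrite ltnS leqn0 => /eqP ->.
by [].
Qed.

Lemma triv_cover L C : calculus_over L C -> Defs.cover L (dec L 1 1 0) C.
Proof.
move=> [HCa HCr]; split; first by move=> A HA; apply: triv_taut; exact: HCa.
move=> r Hr v Hv _; have [_ Hwc] := HCr r Hr; exact: (proj2 (triv_taut Hwc) v Hv).
Qed.


Definition prodD a b D D' :=
  sumb (a * b) (fun z => nat_of_bool (desig D (z %/ b) && desig D' (z %% b)) * 2 ^ z).

Definition PE (L : lang) a b T T' c t :=
  Entry L a T c (tidx a (nth 0 L c) (fun j => (t %/ (a * b) ^ (nth 0 L c - j.+1) %% (a * b)) %/ b)) * b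
  + Entry L b T' c (tidx b (nth 0 L c) (fun j => (t %/ (a * b) ^ (nth 0 L c - j.+1) %% (a * b)) %% b)).

Definition prodT (L : lang) a b T T' :=
  sumb (size L * (a * b) ^ rmax L) (fun p => PE L a b T T' (p %% size L) (p %/ size L) * (a * b) ^ p).

Lemma mix_lt a b x y : x < a -> y < b -> x * b + y < a * b.
Proof. move=> Hx Hy; nia. Qed.

Lemma prod_feval L a b D T D' T' v F : 0 < a -> 0 < b -> (forall i, v i < a * b) -> wf_formula L F ->
  feval (dec L (a * b) (prodD a b D D') (prodT L a b T T')) v F =
  feval (dec L a D T) (fun i => v i %/ b) F * b + feval (dec L b D' T') (fun i => v i %% b) F.
Proof.
move=> Ha Hb Hv; have Hab : 0 < a * b by rewrite muln_gt0 Ha.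
have HvX : valuation (dec L a D T) (fun i => v i %/ b) by move=> i /=; rewrite ltn_divLR.
have HvY : valuation (dec L b D' T') (fun i => v i %% b) by move=> i /=; rewrite ltn_mod.
have HvP : valuation (dec L (a * b) (prodD a b D D') (prodT L a b T T')) v by [].
elim/formula_ind2: F => [n|c args IH] Hwf; first by rewrite /= -divn_eq.
rewrite (dec_app Hab HvP Hwf) (dec_app Ha HvX Hwf) (dec_app Hb HvY Hwf).
set X := feval (dec L a D T) (fun i => v i %/ b).
set Y := feval (dec L b D' T') (fun i => v i %% b).
have HX : forall x, X x < a by move=> x; exact: (feval_lt x (dec_wf L D T Ha) HvX).
have HY : forall x, Y x < b by move=> x; exact: (feval_lt x (dec_wf L D' T' Hb) HvY).
have Hargs : map (feval (dec L (a * b) (prodD a b D D') (prodT L a b T T')) v) args =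
    map (fun x => X x * b + Y x) args.
  by apply: map_In_ext => x Hx; apply: IH => //; exact: wf_args Hwf Hx.
rewrite Hargs; move: (Hwf) => /= /and3P [Hc /eqP Hsz _].
have Hall : all (fun x => x < a * b) (map (fun x => X x * b + Y x) args).
  by rewrite all_map; apply/all_In => x _ /=; apply: mix_lt.
set ti := tuple_index (a * b) _.
have Hti : ti < (a * b) ^ nth 0 L c.
  by rewrite -Hsz -(size_map (fun x => X x * b + Y x)); apply: ti_bound.
rewrite /prodT Entry_dig //; last first.
  move=> p _; rewrite /PE; apply: mix_lt; rewrite /Entry ltn_mod //.
have [_ -> ->] := pos_lemma Hab Hc Hti.
have Hdig := ti_digits Hab Hall; rewrite size_map Hsz in Hdig.
rewrite /PE /tidx.
have E1 : forall (g : nat -> nat),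
    map (fun j => g (ti %/ (a * b) ^ (nth 0 L c - j.+1) %% (a * b))) (iota 0 (nth 0 L c)) =
    map g (map (fun x => X x * b + Y x) args).
  by move=> g; rewrite -Hdig -map_comp.
rewrite (E1 (fun d => d %/ b)) (E1 (fun d => d %% b)) -!map_comp.
congr (Entry _ _ _ _ (tuple_index _ _) * b + Entry _ _ _ _ (tuple_index _ _)).
  by apply: eq_map => x /=; rewrite divnMDl // divn_small // addn0.
by apply: eq_map => x /=; rewrite modnMDl modn_small.
Qed.

Lemma prod_sat L a b D T D' T' v F : 0 < a -> 0 < b -> (forall i, v i < a * b) -> wf_formula L F ->
  satisfies (dec L (a * b) (prodD a b D D') (prodT L a b T T')) v F <->
  satisfies (dec L a D T) (fun i => v i %/ b) F /\ satisfies (dec L b D' T') (fun i => v i %% b) F.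
Proof.
move=> Ha Hb Hv Hw; have Hab : 0 < a * b by rewrite muln_gt0 Ha.
have HvX : valuation (dec L a D T) (fun i => v i %/ b) by move=> i /=; rewrite ltn_divLR.
have HvY : valuation (dec L b D' T') (fun i => v i %% b) by move=> i /=; rewrite ltn_mod.
rewrite dec_sat // dec_sat // dec_sat // prod_feval //.
have HX := feval_lt F (dec_wf L D T Ha) HvX.
have HY := feval_lt F (dec_wf L D' T' Hb) HvY.
rewrite /prodD desig_dig; last exact: mix_lt.
rewrite divnMDl // divn_small // addn0 modnMDl modn_small //.
by split => [/andP|[-> ->]].
Qed.

Lemma prod_taut L a b D T D' T' F : 0 < a -> 0 < b ->
  taut L (dec L (a * b) (prodD a b D D') (prodT L a b T T')) F <->
  taut L (dec L a D T) F /\ taut L (dec L b D' T') F.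
Proof.
move=> Ha Hb; split.
- move=> [Hw H]; split; split => // w Hw'.
  + have Hv : forall i, w i * b + 0 < a * b by move=> i; apply: mix_lt.
    have := proj1 (prod_sat D T D' T' Ha Hb Hv Hw) (H _ Hv).
    move=> [H1 _]; move: H1; rewrite /satisfies (feval_agree _ (w := w)) // => i _.
    by rewrite divnMDl // div0n addn0.
  + have Hv : forall i, 0 * b + w i < a * b by move=> i; apply: mix_lt.
    have := proj1 (prod_sat D T D' T' Ha Hb Hv Hw) (H _ Hv).
    move=> [_ H2]; move: H2; rewrite /satisfies (feval_agree _ (w := w)) // => i _.
    by rewrite modnMDl modn_small.
- move=> [[Hw H1] [_ H2]]; split => // v Hv.
  apply/(prod_sat D T D' T' Ha Hb Hv Hw); split.
    by apply: H1 => i /=; rewrite ltn_divLR.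
  by apply: H2 => i /=; rewrite ltn_mod.
Qed.


Definition unp1 k := sumb k.+1 (fun j => nat_of_bool (k.+1 %% 2 ^ j.+1 == 0)).
Definition unp2 k := (k.+1 %/ 2 ^ unp1 k).-1 %/ 2.
Definition pair2 x y := (2 ^ x * y.*2.+1).-1.

Lemma unp_pair x y : unp1 (pair2 x y) = x /\ unp2 (pair2 x y) = y.
Proof.
have Hpos : 0 < 2 ^ x * y.*2.+1 by rewrite muln_gt0 expn_gt0.
have Hk : (pair2 x y).+1 = 2 ^ x * y.*2.+1 by rewrite /pair2 prednK.
have H1 : unp1 (pair2 x y) = x.
  rewrite /unp1 Hk (@sumb_ext _ _ (fun j => nat_of_bool (j < x))).
    rewrite sumb_lt; apply/minn_idPr.
    have := ltn_expl x (ltnSn 1); have : 1 <= y.*2.+1 by [].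
    move: (2 ^ x) => X; nia.
  move=> j _; congr nat_of_bool.
  rewrite -/(dvdn _ _) Gauss_dvdl ?dvdn_Pexp2l //.
  by apply: coprimeXl; rewrite coprime2n /= odd_double.
split => //; rewrite /unp2 H1 Hk mulKn ?expn_gt0 //=.
by rewrite -muln2 mulnK.
Qed.


Definition Ga L C k := if ok L C (unp1 k).+1 (unp1 (unp2 k)) (unp2 (unp2 k)) then (unp1 k).+1 else 1.
Definition GD L C k := if ok L C (unp1 k).+1 (unp1 (unp2 k)) (unp2 (unp2 k)) then unp1 (unp2 k) else 1.
Definition GT L C k := if ok L C (unp1 k).+1 (unp1 (unp2 k)) (unp2 (unp2 k)) then unp2 (unp2 k) else 0.
Definition decG L C k := dec L (Ga L C k) (GD L C k) (GT L C k).

Fixpoint PA L C n := if n is n'.+1 then PA L C n' * Ga L C n else Ga L C 0.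
Fixpoint PD L C n := if n is n'.+1 then prodD (PA L C n') (Ga L C n) (PD L C n') (GD L C n) else GD L C 0.
Fixpoint PT L C n := if n is n'.+1 then prodT L (PA L C n') (Ga L C n) (PT L C n') (GT L C n) else GT L C 0.
Definition Mseq L C n := dec L (PA L C n) (PD L C n) (PT L C n).

Lemma Ga_pos L C k : 0 < Ga L C k.
Proof. by rewrite /Ga; case: ifP. Qed.

Lemma PA_pos L C n : 0 < PA L C n.
Proof. elim: n => [|n IH] /=; [exact: Ga_pos | by rewrite muln_gt0 IH Ga_pos]. Qed.

Lemma G_cover L C k : calculus_over L C -> Defs.cover L (decG L C k) C.
Proof.
move=> HC; rewrite /decG /Ga /GD /GT; case: ifP => [Hok|_]; last exact: triv_cover.
exact/(ok_cover _ _ HC (ltn0Sn _)).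
Qed.

Lemma taut_M L C n F : taut L (Mseq L C n) F <-> (forall k, k <= n -> taut L (decG L C k) F).
Proof.
elim: n => [|n IH].
  by split => [H [|k] //|H]; apply: H.
rewrite /Mseq /= prod_taut ?PA_pos ?Ga_pos //; split.
  move=> [/IH H1 H2] k; rewrite leq_eqVlt => /orP [/eqP -> //|]; exact: H1.
by move=> H; split; [apply/IH => k Hk; apply: H; exact: ltnW | exact: H].
Qed.

Lemma G_surj L C N : calculus_over L C -> wf_logic L N -> Defs.cover L N C ->
  exists k, forall F, taut L (decG L C k) F -> taut L N F.
Proof.
move=> HC HN Hcov; have Ha : 0 < nv N by case/and4P: HN.
exists (pair2 (nv N).-1 (pair2 (encD N) (encT L N))) => F.
have [E1 E2] := unp_pair (nv N).-1 (pair2 (encD N) (encT L N)).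
have [E3 E4] := unp_pair (encD N) (encT L N).
have Hok : ok L C (nv N) (encD N) (encT L N) by apply/(ok_cover _ _ HC Ha); apply/(enc_cover HC HN).
rewrite /decG /Ga /GD /GT E1 E2 E3 E4 prednK // Hok.
by move/(enc_taut F HN).
Qed.

Lemma seq_approx_M L C : calculus_over L C -> seq_approx L (MC L C) (Mseq L C).
Proof.
move=> HC; split; first by move=> j; apply: dec_wf; exact: PA_pos.
split.
  move=> i j Hji F /taut_M H; apply/taut_M => k Hk; apply: H; exact: leq_trans Hk Hji.
move=> F; split.
  move=> [Hw H] j; apply/taut_M => k _; apply: H; [exact: (dec_wf L _ _ (Ga_pos L C k)) | exact: G_cover].
move=> H; split; first by case: (H 0).
move=> N HN Hcov; have [k Hk] := G_surj HC HN Hcov; apply: Hk.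
by move/taut_M: (H k); apply.
Qed.


Lemma pr_Entry L k ea eT ec et : pr k ea -> pr k eT -> pr k ec -> pr k et ->
  pr k (fun xs => Entry L (ea xs) (eT xs) (ec xs) (et xs)).
Proof. move=> *; rewrite /Entry; prb. Qed.

Lemma pr_desig k eD ez : pr k eD -> pr k ez -> pr k (fun xs => nat_of_bool (desig (eD xs) (ez xs))).
Proof. move=> *; rewrite /desig; prb. Qed.

Lemma pr_fe L k ea eT eu F : pr k ea -> pr k eT -> pr k eu ->
  pr k (fun xs => fe L (ea xs) (eT xs) (eu xs) F).
Proof.
move=> Ha HT Hu; elim/formula_ind2: F => [n|c args IH] /=; first by prb.
apply: pr_Entry => //; first exact: pr_const.
have := @pr_tuple_index k ea (map (fun x xs => fe L (ea xs) (eT xs) (eu xs) x) args) Ha.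
move=> H; apply: pr_ext (H _).
  by move=> xs _; rewrite -map_comp.
by move=> g /List.in_map_iff [x [<- Hx]]; exact: IH.
Qed.

Ltac prc := repeat match goal with |- pr _ _ => first [ assumption |
   apply pr_nth | apply pr_nthb | apply pr_const
 | apply pr_add | apply pr_mul | apply pr_sub | apply pr_exp | apply pr_succ | apply pr_pred
 | apply pr_div | apply pr_mod
 | apply pr_leq | apply pr_eqn | apply pr_band | apply pr_bor | apply pr_bneg | apply pr_bimp
 | apply pr_odd | apply pr_sum | apply pr_allb | apply pr_desig
 | apply pr_fe | apply pr_Entry | apply pr_b1 | apply pr_b2
 | match goal with |- pr _ (fun _ => if _ then _ else _) => apply pr_if end ] end.

Lemma pr_ok L C k ea eD eT : pr k ea -> pr k eD -> pr k eT ->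
  pr k (fun xs => nat_of_bool (ok L C (ea xs) (eD xs) (eT xs))).
Proof.
move=> Ha HD HT; rewrite /ok; apply: pr_band.
  apply: (@pr_all _ k (axioms C) (fun A xs => allb (ea xs ^ VC C) (fun u => desig (eD xs) (fe L (ea xs) (eT xs) u A)))) => A.
  prc.
apply: (@pr_all _ k (rules C) (fun r xs => allb (ea xs ^ VC C) (fun u =>
   all (fun A => desig (eD xs) (fe L (ea xs) (eT xs) u A)) r.1 ==> desig (eD xs) (fe L (ea xs) (eT xs) u r.2)))) => r.
apply: pr_allb.
prc.
apply: pr_bimp. 
apply: (@pr_all _ k.+1 r.1 (fun A ys => desig (eD (behead ys)) (fe L (ea (behead ys)) (eT (behead ys)) (nth 0 ys 0) A))) => A.
all: prc.
Qed.

Lemma pr_unp1 k e : pr k e -> pr k (fun xs => unp1 (e xs)).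
Proof. move=> He; rewrite /unp1; prc. Qed.

Lemma pr_unp2 k e : pr k e -> pr k (fun xs => unp2 (e xs)).
Proof. move=> He; rewrite /unp2; prc; exact: pr_unp1. Qed.

Lemma pr_Ga L C k e : pr k e -> pr k (fun xs => Ga L C (e xs)).
Proof.
move=> He; rewrite /Ga; apply: pr_if; first apply: pr_ok.
all: repeat first [assumption | apply: pr_succ | apply: pr_unp1 | apply: pr_unp2 | apply: pr_const].
Qed.

Lemma pr_GD L C k e : pr k e -> pr k (fun xs => GD L C (e xs)).
Proof.
move=> He; rewrite /GD; apply: pr_if; first apply: pr_ok.
all: repeat first [assumption | apply: pr_succ | apply: pr_unp1 | apply: pr_unp2 | apply: pr_const].
Qed.

Lemma pr_GT L C k e : pr k e -> pr k (fun xs => GT L C (e xs)).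
Proof.
move=> He; rewrite /GT; apply: pr_if; first apply: pr_ok.
all: repeat first [assumption | apply: pr_succ | apply: pr_unp1 | apply: pr_unp2 | apply: pr_const].
Qed.

Lemma pr_prodD k ea eb eD eD' : pr k ea -> pr k eb -> pr k eD -> pr k eD' ->
  pr k (fun xs => prodD (ea xs) (eb xs) (eD xs) (eD' xs)).
Proof. move=> *; rewrite /prodD; prc. Qed.

Lemma pr_PE L k ea eb eT eT' ec et : pr k ea -> pr k eb -> pr k eT -> pr k eT' -> pr k ec -> pr k et ->
  pr k (fun xs => PE L (ea xs) (eb xs) (eT xs) (eT' xs) (ec xs) (et xs)).
Proof.
move=> *; rewrite /PE.
repeat first [assumption | apply: pr_add | apply: pr_mul | apply: pr_Entry | apply: pr_tidx | apply: pr_nthL].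
all: prc; apply: pr_nthL; prc.
Qed.

Lemma pr_prodT L k ea eb eT eT' : pr k ea -> pr k eb -> pr k eT -> pr k eT' ->
  pr k (fun xs => prodT L (ea xs) (eb xs) (eT xs) (eT' xs)).
Proof.
move=> *; rewrite /prodT; apply: pr_sum; first by prc.
apply: pr_mul; last by prc.
apply: pr_PE; prc.
Qed.

Lemma pr_PA1 L C : pr 1 (fun xs => PA L C (nth 0 xs 0)).
Proof.
set b := fun xs : seq nat => Ga L C 0.
set s := fun ys : seq nat => nth 0 ys 1 * Ga L C (nth 0 ys 0).+1.
have E : forall n xs, loopf b s n xs = PA L C n by move=> n xs; elim: n => [|n IH] //=; rewrite IH.
apply: pr_ext (@pr_loop _ _ b s (pr_nth 1 0) _ _); first by move=> xs _; rewrite E.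
  by apply: pr_Ga; apply: pr_const.
by apply: pr_mul; [apply: pr_nth | apply: pr_Ga; apply: pr_succ; apply: pr_nth].
Qed.

Lemma pr_PA L C k e : pr k e -> pr k (fun xs => PA L C (e xs)).
Proof. by apply: pr_comp1; exact: pr_PA1. Qed.

Lemma pr_PD1 L C : pr 1 (fun xs => PD L C (nth 0 xs 0)).
Proof.
set b := fun xs : seq nat => GD L C 0.
set s := fun ys : seq nat => prodD (PA L C (nth 0 ys 0)) (Ga L C (nth 0 ys 0).+1) (nth 0 ys 1) (GD L C (nth 0 ys 0).+1).
have E : forall n xs, loopf b s n xs = PD L C n by move=> n xs; elim: n => [|n IH] //=; rewrite IH.
apply: pr_ext (@pr_loop _ _ b s (pr_nth 1 0) _ _); first by move=> xs _; rewrite E.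
  by apply: pr_GD; apply: pr_const.
apply: pr_prodD; first (by apply: pr_PA; apply: pr_nth); last 1 first.
  by apply: pr_GD; apply: pr_succ; apply: pr_nth.
  by apply: pr_Ga; apply: pr_succ; apply: pr_nth.
exact: pr_nth.
Qed.

Lemma pr_PT1 L C : pr 1 (fun xs => PT L C (nth 0 xs 0)).
Proof.
set b := fun xs : seq nat => GT L C 0.
set s := fun ys : seq nat => prodT L (PA L C (nth 0 ys 0)) (Ga L C (nth 0 ys 0).+1) (nth 0 ys 1) (GT L C (nth 0 ys 0).+1).
have E : forall n xs, loopf b s n xs = PT L C n by move=> n xs; elim: n => [|n IH] //=; rewrite IH.
apply: pr_ext (@pr_loop _ _ b s (pr_nth 1 0) _ _); first by move=> xs _; rewrite E.
  by apply: pr_GT; apply: pr_const.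
apply: pr_prodT; first (by apply: pr_PA; apply: pr_nth); last 1 first.
  by apply: pr_GT; apply: pr_succ; apply: pr_nth.
  by apply: pr_Ga; apply: pr_succ; apply: pr_nth.
exact: pr_nth.
Qed.

Lemma pr_code_dec L k ea eD eT : pr k ea -> pr k eD -> pr k eT ->
  pr k (fun xs => code_logic (dec L (ea xs) (eD xs) (eT xs))).
Proof.
move=> Ha HD HT.
apply: (@pr_ext _ (fun xs => (cpair (ea xs) (cpair (code_seq (filter (fun i => desig (eD xs) i) (iota 0 (ea xs))))
   (cpair (code_seq (mkseq (fun c => code_seq (mkseq (fun t => Entry L (ea xs) (eT xs) c t) (ea xs ^ nth 0 L c))) (size L))) 0).+1).+1).+1)).
  by move=> xs _; rewrite /code_logic /= /mkseq -map_comp.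
apply: pr_succ; apply: pr_cpair => //; apply: pr_succ; apply: pr_cpair.
  apply: (pr_code_filter (P := fun i xs => desig (eD xs) i)) => //; prc.
apply: pr_succ; apply: pr_cpair; last exact: pr_const.
apply: pr_code_mkseq; first exact: pr_const.
apply: pr_code_mkseq; first by prc; apply: pr_nthL; prc.
prc.
Qed.

Lemma M_effective L C : effective (Mseq L C).
Proof.
have : pr 1 (fun xs => code_logic (Mseq L C (nth 0 xs 0))).
  by apply: pr_code_dec; [apply: pr_PA1 | apply: pr_PD1 | apply: pr_PT1].
move=> [p Hp]; exists p => n; exact: (Hp [:: n]).
Qed.


Theorem proposition9 (L : lang) (C : calculus) :
  calculus_over L C ->
  exists M : nat -> logic, seq_approx L (MC L C) M /\ effective M.
Proof.
move=> HC; exists (Mseq L C); split; [exact: seq_approx_M | exact: M_effective].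
Qed.
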